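(* Let $(X,\Pi)$ be a quasiconcave quasisubmodular aggregative game with aggregator $a$, and let $x^*$ be a fESS of it. If $x\in X$ is between some $x'\in X$ and $x^*$, then $\Pi(x,a(x,x'))\ge\Pi(x',a(x,x'))$.
   Context: An aggregative game $(X,\Pi)$ consists of: a totally ordered action set $X$ and a totally ordered set $Z$; an aggregator $a:X\times X\to Z$ that is symmetric ($a(x,y)=a(y,x)$) and monotone increasing (if $x''\ge x'$, $y''\ge y'$ and $(x'',y'')\neq(x',y')$ then $a(x'',y'')>a(x',y')$); and $\Pi:X\times Z\to\mathbb{R}$, the underlying symmetric two-player game having payoff $\pi(x,y)=\Pi(x,a(x,y))$. It is quasisubmodular if for all $z''>z'$ in $Z$ and $x''>x'$ in $X$: $\Pi(x'',z'')-\Pi(x',z'')\ge0\Rightarrow\Pi(x'',z')-\Pi(x',z')\ge0$ and $\Pi(x'',z'')-\Pi(x',z'')>0\Rightarrow\Pi(x'',z')-\Pi(x',z')>0$. It is quasiconcave if for all $x<x'<x''$ in $X$ and $z\in Z$, $\Pi(x',z)\ge\min\{\Pi(x,z),\Pi(x'',z)\}$. An action $x^*$ is a fESS if $\Pi(x^*,a(x^*,x))\ge\Pi(x,a(x^*,x))$ for all $x\in X$. $x$ is between $x'$ and $x^*$ if $x'\le x\le x^*$ or $x^*\le x\le x'$. *)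

(* Defs.v *)
From HB Require Import structures.
From mathcomp Require Import all_boot all_order all_algebra.
From mathcomp Require Import Rstruct.
From Stdlib Require Import Reals.
Set Implicit Arguments. Unset Strict Implicit. Unset Printing Implicit Defensive.
Import Order.TTheory GRing.Theory Num.Theory.
Local Open Scope order_scope.

Section Agg.
Context {dX dZ : Order.disp_t} (X : orderType dX) (Z : orderType dZ).

Definition symmetric_agg (a : X -> X -> Z) : Prop :=
  forall x y, a x y = a y x.

Definition monotone_agg (a : X -> X -> Z) : Prop :=
  forall x' x'' y' y'', x' <= x'' -> y' <= y'' -> (x'', y'') <> (x', y') ->
    a x' y' < a x'' y''.

Definition aggregator (a : X -> X -> Z) : Prop :=
  symmetric_agg a /\ monotone_agg a.

Definition quasisubmodular (Pi : X -> Z -> R) : Prop :=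
  forall (z' z'' : Z) (x' x'' : X), z' < z'' -> x' < x'' ->
    ((0 <= Pi x'' z'' - Pi x' z'')%R -> (0 <= Pi x'' z' - Pi x' z')%R) /\
    ((0 < Pi x'' z'' - Pi x' z'')%R -> (0 < Pi x'' z' - Pi x' z')%R).

Definition quasiconcave (Pi : X -> Z -> R) : Prop :=
  forall (x x' x'' : X) (z : Z), x < x' -> x' < x'' ->
    (Rmin (Pi x z) (Pi x'' z) <= Pi x' z)%R.

Definition fESS (a : X -> X -> Z) (Pi : X -> Z -> R) (xs : X) : Prop :=
  forall x : X, (Pi x (a xs x) <= Pi xs (a xs x))%R.

Definition between (x x' xs : X) : Prop :=
  (x' <= x /\ x <= xs) \/ (xs <= x /\ x <= x').

End Agg.

(* Main.v *)
Require Import Defs.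
From mathcomp Require Import all_boot all_order all_algebra.
From mathcomp Require Import Rstruct.
From Stdlib Require Import Reals Lra.
Import Order.TTheory.
Local Open Scope order_scope.

Theorem lemma6 {dX dZ : Order.disp_t} (X : orderType dX) (Z : orderType dZ)
  (a : X -> X -> Z) (Pi : X -> Z -> R)
  (Ha : aggregator a) (Hqs : quasisubmodular Pi) (Hqc : quasiconcave Pi)
  (xs : X) (Hess : fESS a Pi xs) (x x' : X) (Hb : between x x' xs) :
  (Pi x' (a x x') <= Pi x (a x x'))%R.
Proof.
have [Hsym Hmon] := Ha.
have Hne : forall (u v w : X), u < v -> (v, w) <> (u, w).
  by move=> u v w Huv [E]; move: Huv; rewrite E ltxx.
case: Hb => [[H1 H2]|[H1 H2]].
- move: H1; rewrite le_eqVlt => /orP [/eqP E|H1]; first (subst; lra).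
  move: H2; rewrite le_eqVlt => /orP [/eqP E|H2].
    by subst; apply: Hess.
  have Hz : a x x' < a xs x' by apply: Hmon => //; [exact: ltW | exact: Hne].
  have F := Hess x'.
  have [G _] := Hqs _ _ _ _ Hz (lt_trans H1 H2).
  have G' := G ltac:(lra).
  have Q := Hqc _ _ _ (a x x') H1 H2.
  move: Q; unfold Rmin; case: Rle_dec => ?; lra.
- move: H2; rewrite le_eqVlt => /orP [/eqP E|H2]; first (subst; lra).
  move: H1; rewrite le_eqVlt => /orP [/eqP E|H1].
    by subst; apply: Hess.
  have Hz : a xs x' < a x x' by apply: Hmon => //; [exact: ltW | exact: Hne].
  have F := Hess x'.
  have [_ G] := Hqs _ _ _ _ Hz (lt_trans H1 H2).
  have G' : (Pi x' (a x x') - Pi xs (a x x') <= 0)%R.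
    destruct (Rle_dec (Pi x' (a x x') - Pi xs (a x x')) 0) as [h|h] => //.
    have := G ltac:(lra); lra.
  have Q := Hqc _ _ _ (a x x') H1 H2.
  move: Q; unfold Rmin; case: Rle_dec => ?; lra.
Qed.
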